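(* Let $V_3$ be the subgroup of $P\Sigma_3$ generated by $\nu_{31},\nu_{32},\nu_{33}$, and $OP\Sigma_3=P\Sigma_3/V_3$. Then $V_3$ is a free group of rank $3$, $OP\Sigma_3$ is a free group of rank $3$ (generated by the images of $\xi_{1,2},\xi_{2,1},\xi_{1,3}$), and $P\Sigma_3=V_3\rtimes OP\Sigma_3$ is an almost-direct product, i.e. a semidirect product in which $OP\Sigma_3$ acts trivially on $V_3^{ab}$.
   Context: $F_3$ is the free group on $x_1,x_2,x_3$. For $i\neq j$, $\xi_{i,j}\in\mathrm{Aut}(F_3)$ is given by $\xi_{i,j}(x_i)=x_j^{-1}x_ix_j$ and $\xi_{i,j}(x_l)=x_l$ for $l\neq i$; $P\Sigma_3$ is the subgroup generated by all $\xi_{i,j}$. For $1\leq i\leq 3$, $\nu_{3i}$ is the inner automorphism $x_k\mapsto x_i^{-1}x_kx_i$ of $F_3$ (so $V_3=\mathrm{Inn}(F_3)$, which is normal in $P\Sigma_3$). *)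

(* Defs.v *)
From HB Require Import structures.
From mathcomp Require Import ssreflect ssrfun ssrbool eqtype ssrnat seq path.
From mathcomp Require Import choice fintype bigop monoid.

Set Implicit Arguments.
Unset Strict Implicit.
Unset Printing Implicit Defensive.

(* The free group F_3 on x_1, x_2, x_3, modelled by freely reduced words.    *)
(* Generators are indexed by 'I_3: index 0,1,2 stands for x_1,x_2,x_3.       *)
(* A letter (i, false) is x_i, a letter (i, true) is x_i^{-1}.               *)

Definition letter := ('I_3 * bool)%type.

Definition flip (a : letter) : letter := (a.1, ~~ a.2).

Definition reduced (w : seq letter) : bool :=
  sorted (fun a b => b != flip a) w.

Definition push (a : letter) (w : seq letter) : seq letter :=
  if w is b :: w' then (if b == flip a then w' else a :: w) else [:: a].

Definition reduce (s : seq letter) : seq letter := foldr push [::] s.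

Lemma push_reduced a w : reduced w -> reduced (push a w).
Proof.
case: w => [|b w] //= H.
case: eqP => [_|/eqP ne].
  by case: w H => //= c w /andP [].
by rewrite /reduced /= ne.
Qed.

Lemma reduce_reduced s : reduced (reduce s).
Proof. by elim: s => [|a s IH] //=; apply: push_reduced. Qed.

Record F3 := MkF3 { fword :> seq letter; fwordP : reduced fword }.

Definition F3one : F3 := @MkF3 [::] isT.
Definition F3mul (u v : F3) : F3 :=
  @MkF3 (reduce (fword u ++ fword v)) (reduce_reduced _).
Definition F3inv (u : F3) : F3 :=
  @MkF3 (reduce (rev (map flip (fword u)))) (reduce_reduced _).

Definition x_ (i : 'I_3) : F3 := @MkF3 [:: (i, false)] isT.

Definition letterF (f : 'I_3 -> F3) (a : letter) : F3 :=
  if a.2 then F3inv (f a.1) else f a.1.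
Definition extF (f : 'I_3 -> F3) (w : F3) : F3 :=
  foldr (fun a acc => F3mul (letterF f a) acc) F3one (fword w).

(* Automorphisms are handled as functions F3 -> F3; the group law of Aut(F3) *)
(* is composition (f * g := f \o g), the unit is id.                        *)

Definition Aut3 := (F3 -> F3)%type.

Definition inverse_of (f g : Aut3) : Prop := cancel f g /\ cancel g f.

Inductive gen (S : Aut3 -> Prop) : Aut3 -> Prop :=
| gen_id : gen S id
| gen_S f : S f -> gen S f
| gen_comp f g : gen S f -> gen S g -> gen S (f \o g)
| gen_inv f g : gen S f -> inverse_of f g -> gen S g.

Definition xi (i j : 'I_3) : Aut3 :=
  extF (fun l => if l == i then F3mul (F3inv (x_ j)) (F3mul (x_ i) (x_ j))
                 else x_ l).

Definition nu (i : 'I_3) : Aut3 :=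
  fun w => F3mul (F3inv (x_ i)) (F3mul w (x_ i)).

Definition PSigma3 : Aut3 -> Prop :=
  gen (fun f => exists i j : 'I_3, i != j /\ f = xi i j).
Definition V3 : Aut3 -> Prop := gen (fun f => exists i : 'I_3, f = nu i).

Definition commsub (H : Aut3 -> Prop) : Aut3 -> Prop :=
  gen (fun h => exists f g f' g', [/\ H f, H g, inverse_of f f', inverse_of g g'
                                    & h = f' \o g' \o f \o g]).

Definition evalA (b binv : 'I_3 -> Aut3) (w : F3) : Aut3 :=
  foldr (fun a acc => (if a.2 then binv a.1 else b a.1) \o acc) id (fword w).

Definition free_basis3 (H : Aut3 -> Prop) (b : 'I_3 -> Aut3) : Prop :=
  exists binv : 'I_3 -> Aut3,
    [/\ forall i, inverse_of (b i) (binv i),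
        injective (evalA b binv)
      & forall f, H f <-> exists w, f = evalA b binv w].

Definition free_rank3 (H : Aut3 -> Prop) : Prop :=
  exists b : 'I_3 -> Aut3, free_basis3 H b.

Local Open Scope group_scope.
Definition evalG (G : groupType) (q : 'I_3 -> G) (w : F3) : G :=
  \prod_(a <- fword w) (if a.2 then (q a.1)^-1 else q a.1).
Local Close Scope group_scope.

(* pi : PSigma3 -> Q is a quotient map of PSigma3 by V3, i.e. a surjective
   homomorphism (on PSigma3) with kernel V3; Q is then a model of OP Sigma_3 *)
Definition quotient_map_PS_V (Q : groupType) (pi : Aut3 -> Q) : Prop :=
  [/\ forall f g, PSigma3 f -> PSigma3 g -> pi (f \o g) = (pi f * pi g)%g,
      forall q : Q, exists2 f, PSigma3 f & pi f = q
    & forall f, PSigma3 f -> (pi f = 1%g <-> V3 f)].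

Definition i1 : 'I_3 := @Ordinal 3 0 isT.
Definition i2 : 'I_3 := @Ordinal 3 1 isT.
Definition i3 : 'I_3 := @Ordinal 3 2 isT.

Definition OPgens (Q : groupType) (pi : Aut3 -> Q) : 'I_3 -> Q :=
  fun k => if k == i1 then pi (xi i1 i2)
           else if k == i2 then pi (xi i2 i1) else pi (xi i1 i3).

(* Main.v *)
Require Import Defs.
From HB Require Import structures.
From mathcomp Require Import ssreflect ssrfun ssrbool eqtype ssrnat seq path.
From mathcomp Require Import choice fintype bigop monoid.
From Stdlib Require Import FunctionalExtensionality ClassicalEpsilon Lia ZArith.
From mathcomp Require Import zify.

Set Implicit Arguments.
Unset Strict Implicit.
Unset Printing Implicit Defensive.

Lemma flipK : involutive flip.
Proof. by case=> i b; rewrite /flip /= negbK. Qed.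

Lemma flip_eq a b : (flip a == b) = (a == flip b).
Proof. by apply/eqP/eqP => [<-|->]; rewrite flipK. Qed.

Lemma reduced_cons a w :
  reduced (a :: w) = (if w is b :: _ then b != flip a else true) && reduced w.
Proof. by case: w => //= b w. Qed.

Lemma reduced_behead a w : reduced (a :: w) -> reduced w.
Proof. by rewrite reduced_cons => /andP []. Qed.

Lemma push_id a w : reduced w -> (if w is b :: _ then b != flip a else true) ->
  push a w = a :: w.
Proof. by case: w => //= b w _ /negbTE ->. Qed.

Lemma reduce_id w : reduced w -> reduce w = w.
Proof.
elim: w => // a w IH H.
rewrite /= IH; last exact: reduced_behead H.
by apply: push_id; [exact: reduced_behead H| move: H; rewrite reduced_cons => /andP[]].
Qed.

Lemma pushK a w : reduced w -> push a (push (flip a) w) = w.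
Proof.
case: w => [|b w] H /=; first by rewrite eqxx.
rewrite flipK; case: eqP => [Eb | ne] /=; last by rewrite eqxx.
subst b; apply: push_id (reduced_behead H) _.
by move: H; rewrite reduced_cons => /andP[].
Qed.

Definition frd (r s : seq letter) := foldr push r s.

Lemma frd_reduced r s : reduced r -> reduced (frd r s).
Proof. by move=> Hr; elim: s => //= a s IH; apply: push_reduced. Qed.

Lemma frd_push r a w : reduced r -> reduced w ->
  frd r (push a w) = push a (frd r w).
Proof.
move=> Hr; case: w => [|b w] //= Hw.
case: eqP => [Eb | ne] //; subst b.
by rewrite /= pushK //; apply: frd_reduced.
Qed.

Lemma frd_reduce r s : reduced r -> frd r (reduce s) = frd r s.
Proof.
move=> Hr; elim: s => //= a s IH.
by rewrite frd_push // ?IH // reduce_reduced.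
Qed.

Lemma reduce_cat s t : reduce (s ++ t) = frd (reduce t) s.
Proof. by rewrite /reduce foldr_cat. Qed.

Lemma reduce_reduce s : reduce (reduce s) = reduce s.
Proof. by rewrite reduce_id // reduce_reduced. Qed.

Lemma reduce_catl s t : reduce (reduce s ++ t) = reduce (s ++ t).
Proof. by rewrite !reduce_cat frd_reduce // reduce_reduced. Qed.

Lemma reduce_catr s t : reduce (s ++ reduce t) = reduce (s ++ t).
Proof. by rewrite !reduce_cat reduce_reduce. Qed.

Definition winv (s : seq letter) := rev (map flip s).

Lemma winvK : involutive winv.
Proof. by move=> s; rewrite /winv map_rev revK -map_comp (eq_map flipK) map_id. Qed.

Lemma winv_cat s t : winv (s ++ t) = winv t ++ winv s.
Proof. by rewrite /winv map_cat rev_cat. Qed.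

Lemma winv_cons a s : winv (a :: s) = rcons (winv s) (flip a).
Proof. by rewrite /winv /= rev_cons. Qed.

Lemma reduced_winv s : reduced s -> reduced (winv s).
Proof.
rewrite /reduced /winv rev_sorted sorted_map => H.
apply: sub_sorted H => a b /=.
by rewrite flipK eq_sym.
Qed.

Lemma reduced_rev s : reduced s -> reduced (rev s).
Proof.
rewrite /reduced rev_sorted => H; apply: sub_sorted H => a b /=.
by rewrite eq_sym flip_eq.
Qed.

Lemma frd_winv r s : frd (s ++ r) (winv s) = r.
Proof.
elim: s => //= a s IH.
rewrite winv_cons -cats1 /frd foldr_cat /= flipK eqxx.
exact: IH.
Qed.

Lemma reduce_winvl s : reduced s -> reduce (winv s ++ s) = [::].
Proof. by move=> H; rewrite reduce_cat reduce_id // -[X in frd X _]cats0 frd_winv. Qed.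

Lemma reduce_winvr s : reduced s -> reduce (s ++ winv s) = [::].
Proof.
move=> H; rewrite -{1}(winvK s) reduce_winvl //; exact: reduced_winv.
Qed.

Lemma F3_eq (u v : F3) : fword u = fword v -> u = v.
Proof.
case: u v => [u pu] [v pv] /= E; subst v; congr MkF3; exact: eq_irrelevance.
Qed.

HB.instance Definition _ := [isSub for fword].
HB.instance Definition _ := [Choice of F3 by <:].

Lemma F3mulA : associative F3mul.
Proof.
move=> u v w; apply: F3_eq => /=.
by rewrite reduce_catl reduce_catr catA.
Qed.

Lemma F3mul1 : left_id F3one F3mul.
Proof. by move=> u; apply: F3_eq; rewrite /= reduce_id // fwordP. Qed.

Lemma F3mulr1 : right_id F3one F3mul.
Proof. by move=> u; apply: F3_eq; rewrite /= cats0 reduce_id // fwordP. Qed.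

Lemma F3mulV : left_inverse F3one F3inv F3mul.
Proof.
move=> u; apply: F3_eq; rewrite /= reduce_catl reduce_winvl //; exact: fwordP.
Qed.

Lemma F3mulVr : right_inverse F3one F3inv F3mul.
Proof.
move=> u; apply: F3_eq; rewrite /= reduce_catr reduce_winvr //; exact: fwordP.
Qed.

HB.instance Definition _ := isGroup.Build F3 F3mulA F3mul1 F3mulr1 F3mulV F3mulVr.

Local Open Scope group_scope.

Lemma F3mulE (u v : F3) : F3mul u v = u * v. Proof. by []. Qed.
Lemma F3invE (u : F3) : F3inv u = u^-1. Proof. by []. Qed.
Lemma F3oneE : F3one = 1. Proof. by []. Qed.

Lemma fword_mul (u v : F3) : fword (u * v) = reduce (fword u ++ fword v).
Proof. by []. Qed.
Lemma fword_inv (u : F3) : fword (u^-1) = winv (fword u).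
Proof. by rewrite /= reduce_id //; apply: reduced_winv; exact: fwordP. Qed.
Lemma fword_mulF (u v : F3) : fword (F3mul u v) = reduce (fword u ++ fword v).
Proof. by []. Qed.
Lemma fword_invF (u : F3) : fword (F3inv u) = winv (fword u).
Proof. exact: fword_inv. Qed.
Lemma fword_one : fword (1 : F3) = [::]. Proof. by []. Qed.

Definition lw (a : letter) : F3 := @MkF3 [:: a] isT.

Lemma lw_false i : lw (i, false) = x_ i. Proof. by []. Qed.
Lemma lw_flip a : lw (flip a) = (lw a)^-1.
Proof. by apply: F3_eq; rewrite fword_inv. Qed.
Lemma lw_true i : lw (i, true) = (x_ i)^-1.
Proof. by rewrite -lw_false -lw_flip. Qed.

Lemma F3_cons a s (H : reduced (a :: s)) :
  MkF3 H = lw a * MkF3 (reduced_behead H).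
Proof. by apply: F3_eq; rewrite fword_mul; exact: (esym (reduce_id H)). Qed.

Lemma F3_ind (P : F3 -> Prop) :
  P 1 -> (forall a w, P w -> P (lw a * w)) -> forall w, P w.
Proof.
move=> P1 PS [s]; elim: s => [|a s IH] H.
  by rewrite (_ : MkF3 H = 1) //; apply: F3_eq.
by rewrite F3_cons; apply: PS.
Qed.

Definition hom (f : F3 -> F3) := forall u v, f (u * v) = f u * f v.

Lemma hom1 f : hom f -> f 1 = 1.
Proof. by move=> Hf; apply: (mulgI (f 1)); rewrite -Hf !mulg1. Qed.

Lemma homV f u : hom f -> f u^-1 = (f u)^-1.
Proof.
move=> Hf; apply: (mulgI (f u)); by rewrite -Hf !mulgV hom1.
Qed.

Definition ext_s (f : 'I_3 -> F3) (s : seq letter) : F3 :=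
  foldr (fun a acc => letterF f a * acc) 1 s.

Lemma letterF_flip f a : letterF f (flip a) = (letterF f a)^-1.
Proof. by case: a => i [] //=; rewrite /letterF /= invgK. Qed.

Lemma ext_s_cat f s t : ext_s f (s ++ t) = ext_s f s * ext_s f t.
Proof. by elim: s => [|a s IH] /=; rewrite ?mul1g // IH mulgA. Qed.

Lemma ext_s_push f a w : ext_s f (push a w) = letterF f a * ext_s f w.
Proof.
case: w => [|b w] //=; case: eqP => [-> | _] //.
by rewrite letterF_flip mulVKg.
Qed.

Lemma ext_s_reduce f s : ext_s f (reduce s) = ext_s f s.
Proof. by elim: s => //= a s IH; rewrite ext_s_push IH. Qed.

Lemma extF_hom f : hom (extF f).
Proof.
move=> u v; rewrite /extF -/(ext_s f _) fword_mul ext_s_reduce ext_s_cat //.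
Qed.

Lemma extF_x f i : extF f (x_ i) = f i.
Proof. by rewrite /extF /= F3oneE F3mulE mulg1. Qed.

Lemma hom_extF g : hom g -> g =1 extF (fun i => g (x_ i)).
Proof.
move=> Hg; elim/F3_ind => [|a w IH]; first by rewrite hom1.
rewrite Hg extF_hom IH; congr (_ * _).
case: a => i [] /=; rewrite /extF /= F3oneE F3mulE mulg1 //.
by rewrite lw_true homV.
Qed.

Lemma hom_eq g h : hom g -> hom h -> (forall i, g (x_ i) = h (x_ i)) -> g =1 h.
Proof.
move=> Hg Hh E w; rewrite (hom_extF Hg) (hom_extF Hh).
by rewrite /extF; elim: (fword w) => //= a s ->; rewrite /letterF E.
Qed.

Lemma I3_cases (P : 'I_3 -> Prop) : P i1 -> P i2 -> P i3 -> forall i, P i.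
Proof.
move=> P1 P2 P3 [m Hm]; case: m Hm => [|[|[|m]]] Hm //.
- by have -> : Ordinal Hm = i1 by apply: val_inj.
- by have -> : Ordinal Hm = i2 by apply: val_inj.
- by have -> : Ordinal Hm = i3 by apply: val_inj.
Qed.

Lemma hom_comp f g : hom f -> hom g -> hom (f \o g).
Proof. by move=> Hf Hg u v /=; rewrite Hg Hf. Qed.

Lemma hom_id : hom id. Proof. by []. Qed.

Definition cj (c t : F3) : F3 := t ^ c.

Lemma cjE c t : cj c t = F3mul (F3inv c) (F3mul t c). Proof. by []. Qed.
Lemma cj_hom c : hom (cj c). Proof. by move=> u v; rewrite /cj conjMg. Qed.
Lemma cjM c d t : cj c (cj d t) = cj (d * c) t. Proof. by rewrite /cj conjgM. Qed.
Lemma cj1 t : cj 1 t = t. Proof. by rewrite /cj conjg1. Qed.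
Lemma cjK c t : cj c^-1 (cj c t) = t. Proof. by rewrite /cj conjgK. Qed.
Lemma cjKV c t : cj c (cj c^-1 t) = t. Proof. by rewrite /cj conjgKV. Qed.
Lemma hom_cj f c t : hom f -> f (cj c t) = cj (f c) (f t).
Proof. by move=> Hf; rewrite /cj /conjg !Hf homV. Qed.
Lemma nuE i : nu i = cj (x_ i). Proof. by []. Qed.

Section EvalA.
Variables (b binv : 'I_3 -> Aut3).
Hypothesis bK : forall k t, binv k (b k t) = t.
Hypothesis bKV : forall k t, b k (binv k t) = t.

Definition Lt (a : letter) : Aut3 := if a.2 then binv a.1 else b a.1.
Definition evalS (s : seq letter) : Aut3 := foldr (fun a acc => Lt a \o acc) id s.

Lemma evalA_S w : evalA b binv w = evalS (fword w). Proof. by []. Qed.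

Lemma foldr_acc s (acc : Aut3) t :
  foldr (fun a acc => Lt a \o acc) acc s t = evalS s (acc t).
Proof. by elim: s t => //= a s IH t; rewrite IH. Qed.

Lemma evalS_cat s u t : evalS (s ++ u) t = evalS s (evalS u t).
Proof. by rewrite /evalS foldr_cat foldr_acc. Qed.

Lemma LtK a t : Lt a (Lt (flip a) t) = t.
Proof. by case: a => k [] /=; rewrite /Lt /=. Qed.

Lemma evalS_push a w t : evalS (push a w) t = Lt a (evalS w t).
Proof.
case: w => [|c w] //=; case: eqP => [-> | _] //=.
by rewrite LtK.
Qed.

Lemma evalS_reduce s t : evalS (reduce s) t = evalS s t.
Proof. by elim: s t => //= a s IH t; rewrite evalS_push IH. Qed.

Lemma evalA_mul u v t : evalA b binv (u * v) t = evalA b binv u (evalA b binv v t).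
Proof. by rewrite !evalA_S fword_mul evalS_reduce evalS_cat. Qed.

Lemma evalA_one t : evalA b binv 1 t = t. Proof. by []. Qed.

Lemma evalA_invK u t : evalA b binv u^-1 (evalA b binv u t) = t.
Proof. by rewrite -evalA_mul mulVg. Qed.

Lemma evalA_invKV u t : evalA b binv u (evalA b binv u^-1 t) = t.
Proof. by rewrite -evalA_mul mulgV. Qed.

End EvalA.

Definition jok (s t : seq letter) :=
  if s is x :: s' then (if t is y :: _ then y != flip (last x s') else true) else true.

Lemma reduced_cat s t : reduced s -> reduced t -> jok s t -> reduced (s ++ t).
Proof.
case: s => [|x s] //; case: t => [|y t]; rewrite ?cats0 // /reduced /= => Hs Ht J.
by rewrite cat_path Hs /= J.
Qed.

Lemma jok_rcons w z m t : jok (rcons w z) (m :: t) = (m != flip z).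
Proof. by case: w => [|x w] //=; rewrite last_rcons. Qed.

Definition nstart (i : 'I_3) (w : seq letter) :=
  if w is a :: _ then a.1 != i else true.

Lemma reduced_conj (s : seq letter) l : reduced s -> nstart l.1 s ->
  reduced (winv s ++ l :: s).
Proof.
move=> Hs Hn; apply: reduced_cat; first exact: reduced_winv.
  case: s Hs Hn => [|y s] //= Hs Hn; rewrite /reduced /=.
  by move: Hs; rewrite /reduced /= => ->; rewrite andbT; apply: contra Hn => /eqP ->.
case: s Hs Hn => [|y s] // Hs Hn.
by rewrite winv_cons jok_rcons flipK; apply: contra Hn => /eqP ->.
Qed.

Lemma fword_cj A l : fword (cj A (lw l)) = reduce (winv (fword A) ++ l :: fword A).
Proof.
rewrite cjE fword_mulF fword_invF reduce_catr.
by [].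
Qed.

Lemma cj_word A l : nstart l.1 (fword A) ->
  fword (cj A (lw l)) = winv (fword A) ++ l :: fword A.
Proof. by move=> Hn; rewrite fword_cj reduce_id //; apply: reduced_conj => //; exact: fwordP. Qed.

Lemma size_winv s : size (winv s) = size s.
Proof. by rewrite /winv size_rev size_map. Qed.

Lemma cj_inj_norm A A' l : nstart l.1 (fword A) -> nstart l.1 (fword A') ->
  cj A (lw l) = cj A' (lw l) -> A = A'.
Proof.
move=> H1 H2 E; have := congr1 fword E; rewrite !cj_word // => E'.
have Hs := congr1 size E'; rewrite !size_cat /= !size_winv in Hs.
have Hs' : size (fword A) = size (fword A') by lia.
have := congr1 (drop (size (fword A))) E'.
rewrite {1}(_ : size (fword A) = size (winv (fword A))) ?size_winv // drop_size_cat.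
rewrite Hs' (_ : size (fword A') = size (winv (fword A'))) ?size_winv // drop_size_cat.
all: try by rewrite size_winv.
by case => EA; apply: F3_eq.
Qed.

Lemma cj_fix_norm A l : nstart l.1 (fword A) -> cj A (lw l) = lw l -> A = 1.
Proof.
move=> H E; have := congr1 fword E; rewrite cj_word // => E'.
have Hs := congr1 size E'; rewrite size_cat /= size_winv in Hs.
by apply: F3_eq; case: (fword A) Hs => //= x s; lia.
Qed.

Fixpoint stripw (i : 'I_3) (w : seq letter) :=
  if w is a :: w' then (if a.1 == i then stripw i w' else w) else [::].

Lemma stripw_reduced i w : reduced w -> reduced (stripw i w).
Proof. by elim: w => //= a w IH H; case: ifP => // _; apply: IH (reduced_behead H). Qed.

Definition stripF i (A : F3) : F3 := MkF3 (stripw_reduced i (fwordP A)).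
Arguments stripF : simpl never.

Lemma nstart_strip i w : nstart i (stripw i w).
Proof. by elim: w => //= a w IH; case: ifP => //= ->. Qed.

Lemma stripw_cat g p q : nstart g q -> stripw g (p ++ q) = stripw g p ++ q.
Proof.
move=> Hq; elim: p => [|a p IH] /=.
  by case: q Hq => //= a q /negbTE ->.
by case: ifP.
Qed.

Lemma stripw_nil g w : stripw g w = [::] -> all (fun a => a.1 == g) w.
Proof. by elim: w => //= a w IH; case: ifP => //= -> /IH. Qed.

Lemma cj_x_self a : cj (lw a) (lw (a.1, false)) = lw (a.1, false).
Proof.
case: a => i [] /=; rewrite /cj.
  by rewrite lw_true lw_false conjgE invgK mulgA mulgK.
by rewrite lw_false conjgE mulKg.
Qed.

Lemma cj_strip i A : cj (stripF i A) (x_ i) = cj A (x_ i).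
Proof.
case: A => s; elim: s => [|a s IH] H //.
rewrite /stripF /=; move: (stripw_reduced _ _); rewrite /=.
case: ifP => [/eqP Ea | _] Hr; last by congr cj; apply: F3_eq.
rewrite [RHS](_ : _ = cj (MkF3 (reduced_behead H)) (x_ i)).
  by rewrite -IH; congr cj; apply: F3_eq.
rewrite F3_cons -cjM -lw_false -Ea cj_x_self //.
Qed.


Definition nuinv (i : 'I_3) : Aut3 := cj (x_ i)^-1.

Lemma nuK i t : nuinv i (nu i t) = t. Proof. exact: cjK. Qed.
Lemma nuKV i t : nu i (nuinv i t) = t. Proof. exact: cjKV. Qed.

Lemma nu_inverse i : inverse_of (nu i) (nuinv i).
Proof. by split=> t; [apply: nuK | apply: nuKV]. Qed.

Definition Rs (s : seq letter) : F3 := foldr (fun a acc => acc * lw a) 1 s.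

Lemma evalS_nu s t : evalS nu nuinv s t = cj (Rs s) t.
Proof.
elim: s t => [|a s IH] t /=; first by rewrite cj1.
rewrite IH -cjM; case: a => i [] //.
Qed.

Lemma fword_Rs s : fword (Rs s) = reduce (rev s).
Proof.
elim: s => //= a s IH.
by rewrite IH reduce_catl rev_cons cats1.
Qed.

Lemma cj_center d : (forall t, cj d t = t) -> d = 1.
Proof.
move=> H.
have H1 : stripF i1 d = 1.
  apply: (@cj_fix_norm _ (i1, false)); first exact: nstart_strip.
  by rewrite lw_false cj_strip H.
have Hall := stripw_nil (f_equal fword H1).
apply: (@cj_fix_norm _ (i2, false)); last by rewrite H.
by case: (fword d) Hall => //= a s /andP [/eqP -> _].
Qed.

Lemma cj_inj c1 c2 : (forall t, cj c1 t = cj c2 t) -> c1 = c2.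
Proof.
move=> H; apply/eqP; rewrite -divg_eq1; apply/eqP; apply: cj_center => t.
by rewrite -cjM H cjM mulgV cj1.
Qed.

Lemma V3_cj f : V3 f -> exists c, f = cj c.
Proof.
elim => [|g [i ->]|g h _ [c1 ->] _ [c2 ->]|g h _ [c ->] [K1 K2]].
- by exists 1; apply: functional_extensionality => t; rewrite cj1.
- by exists (x_ i).
- by exists (c2 * c1); apply: functional_extensionality => t; rewrite /= cjM.
- exists c^-1; apply: functional_extensionality => t.
  by rewrite -{1}(cjKV c t) K1.
Qed.

Lemma evalS_V3 s : V3 (evalS nu nuinv s).
Proof.
elim: s => [|a s IH] /=; first exact: gen_id.
apply: gen_comp IH; case: a => i [] /=; rewrite /Lt /=.
  by apply: (@gen_inv _ (nu i)); [apply: gen_S; exists i | exact: nu_inverse].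
by apply: gen_S; exists i.
Qed.

Definition revF (c : F3) : F3 := MkF3 (reduced_rev (fwordP c)).

Lemma Rs_rev (c : F3) : Rs (rev (fword c)) = c.
Proof. by apply: F3_eq; rewrite fword_Rs revK reduce_id //; exact: fwordP. Qed.

Lemma cj_V3 c : V3 (cj c).
Proof.
have -> : cj c = evalA nu nuinv (revF c).
  by apply: functional_extensionality => t; rewrite evalA_S evalS_nu Rs_rev.
exact: evalS_V3.
Qed.

Lemma part1 : free_rank3 V3.
Proof.
exists nu, nuinv; split.
- exact: nu_inverse.
- move=> w1 w2 E.
  have E' : Rs w1 = Rs w2.
    by apply: cj_inj => t; rewrite -!evalS_nu -!evalA_S E.
  have := congr1 fword E'; rewrite !fword_Rs !reduce_id; try (apply: reduced_rev; exact: fwordP).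
  by move/(congr1 rev); rewrite !revK => E2; apply: F3_eq.
- move=> f; split.
  + case/V3_cj => c ->; exists (revF c).
    by apply: functional_extensionality => t; rewrite evalA_S evalS_nu Rs_rev.
  + by case=> w ->; exact: evalS_V3.
Qed.

Definition src (k : 'I_3) : 'I_3 := if k == i1 then i1 else if k == i2 then i2 else i1.
Definition dst (k : 'I_3) : 'I_3 := if k == i1 then i2 else if k == i2 then i1 else i3.

Definition yf (k : 'I_3) (s : bool) : Aut3 :=
  extF (fun l => if l == src k then cj (lw (dst k, s)) (x_ (src k)) else x_ l).
Definition yb k := yf k false.
Definition ybinv k := yf k true.

Lemma yb_xi k : yb k = xi (src k) (dst k). Proof. by []. Qed.

Lemma src_dst k : src k != dst k.
Proof. by elim/I3_cases: k. Qed.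

Lemma yf_hom k s : hom (yf k s). Proof. exact: extF_hom. Qed.

Lemma yf_x k s l : yf k s (x_ l) = if l == src k then cj (lw (dst k, s)) (x_ (src k)) else x_ l.
Proof. exact: extF_x. Qed.

Lemma hom_lw h j C s : hom h -> h (x_ j) = cj C (x_ j) -> h (lw (j, s)) = cj C (lw (j, s)).
Proof.
move=> Hh E; case: s; last by rewrite lw_false.
by rewrite lw_true homV // E (homV _ (cj_hom C)).
Qed.

Lemma yf_lw_dst k s s' : yf k s (lw (dst k, s')) = lw (dst k, s').
Proof.
rewrite (@hom_lw _ _ 1) ?cj1 //; first exact: yf_hom.
by rewrite yf_x eq_sym (negbTE (src_dst k)).
Qed.

Lemma yfK k s t : yf k (~~ s) (yf k s t) = t.
Proof.
apply: (@hom_eq (yf k (~~ s) \o yf k s) id) => //.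
  exact: hom_comp (yf_hom _ _) (yf_hom _ _).
move=> l /=; rewrite yf_x; case: ifP => [/eqP -> | E]; last by rewrite yf_x E.
rewrite hom_cj; last exact: yf_hom.
rewrite yf_lw_dst yf_x eqxx cjM.
have -> : lw (dst k, ~~ s) = (lw (dst k, s))^-1 by rewrite -lw_flip.
by rewrite mulVg cj1.
Qed.

Lemma ybK k t : ybinv k (yb k t) = t. Proof. exact: (yfK k false). Qed.
Lemma ybKV k t : yb k (ybinv k t) = t. Proof. exact: (yfK k true). Qed.

Lemma Lt_y a : Lt yb ybinv a = yf a.1 a.2.
Proof. by case: a => k []. Qed.

Definition hS (s : seq letter) : Aut3 := evalS yb ybinv s.

Lemma hS_hom s : hom (hS s).
Proof.
elim: s => [|a s IH] /=; first exact: hom_id.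
rewrite /hS /= Lt_y; exact: hom_comp (yf_hom _ _) IH.
Qed.

Lemma hS_rcons s z t : hS (rcons s z) t = hS s (yf z.1 z.2 t).
Proof. by rewrite /hS -cats1 evalS_cat /= Lt_y. Qed.

Open Scope Z_scope.
Fixpoint t3r (r : seq letter) : Z :=
  if r is l :: r' then (if l.1 == i3 then (if l.2 then -1 else 1) + t3r r' else 0) else 0.
Definition t3 (w : seq letter) : Z := t3r (rev w).
Definition sg (b : bool) : Z := if b then -1 else 1.
Close Scope Z_scope.

Lemma t3r_x3 s r : t3r ((i3, s) :: r) = (sg s + t3r r)%Z. Proof. by []. Qed.

Lemma t3r_cat_nx3 u l v : l.1 != i3 -> t3r (u ++ l :: v) = t3r u.
Proof. by move=> Hl; elim: u => [|a u IH] /=; [rewrite (negbTE Hl) | rewrite IH]. Qed.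

Lemma t3_cat_nx3 p l b : l.1 != i3 -> t3 (p ++ l :: b) = t3 b.
Proof.
move=> Hl; rewrite /t3 rev_cat rev_cons -cats1 -catA /=.
by rewrite t3r_cat_nx3.
Qed.

Lemma t3_cons_nx3 a w : a.1 != i3 -> t3 (a :: w) = t3 w.
Proof. by move=> Ha; rewrite /t3 rev_cons -cats1 t3r_cat_nx3. Qed.

Lemma t3_strip g w : g != i3 -> t3 (stripw g w) = t3 w.
Proof.
move=> Hg; elim: w => //= a w IH; case: ifP => // /eqP Ea.
by rewrite IH t3_cons_nx3 // Ea.
Qed.

Lemma reduced_catP s t : reduced (s ++ t) -> reduced s /\ reduced t.
Proof.
case: s => [|x s] //=; rewrite /reduced /= cat_path => /andP [H1 H2].
by split => //; apply: path_sorted H2.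
Qed.

Lemma catsI (s1 s2 b : seq letter) : s1 ++ b = s2 ++ b -> s1 = s2.
Proof.
move/(congr1 rev); rewrite !rev_cat => E.
have := congr1 (drop (size (rev b))) E; rewrite !drop_size_cat.
- by move/(congr1 rev); rewrite !revK.
all: by [].
Qed.

Lemma cat_cons_inj p p' x x' (b : seq letter) : p ++ x :: b = p' ++ x' :: b -> x = x'.
Proof. by rewrite -!cat_rcons => /catsI /rcons_inj [_ ->]. Qed.

Lemma t3_red_x3 a s : reduced a ->
  t3 (reduce (a ++ [:: (i3, s)])) = (t3 a + sg s)%Z.
Proof.
case/lastP: a => [|a m] H; first by rewrite /t3 /=; case: s.
case E: (m == flip (i3, s)).
  move/eqP: E => ->; rewrite cat_rcons reduce_cat /= flipK eqxx /=.
  have Ha : reduced a by move: H; rewrite -cats1 => /reduced_catP [].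
  rewrite (_ : frd [::] a = a); last exact: reduce_id Ha.
  rewrite /t3 rev_rcons t3r_x3; case: s; cbn [negb sg snd fst]; lia.
rewrite reduce_id.
  by rewrite /t3 rev_cat (_ : rev [:: (i3, s)] = [:: (i3, s)]) // cat1s t3r_x3 Z.add_comm.
apply: reduced_cat => //; by rewrite jok_rcons eq_sym flip_eq E.
Qed.

Lemma reduced_consn k s b : reduced b -> nstart k b -> reduced ((k, s) :: b).
Proof.
move=> Hb Hn; rewrite reduced_cons Hb andbT; case: b Hb Hn => //= c b _ Hc.
by apply: contra Hc => /eqP ->.
Qed.

Lemma jok_nstart r (l : letter) b : nstart l.1 b -> jok (rcons r (flip l)) b.
Proof.
case: b => [|c b] Hc; first by case: r.
by rewrite jok_rcons flipK; apply: contra Hc => /eqP ->.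
Qed.

Lemma trans_gen (g k : 'I_3) (a b : seq letter) s : g != k ->
  reduced a -> reduced b -> nstart k b ->
  ~ (exists p, a = p ++ (k, ~~ s) :: b) ->
  exists p, stripw g (reduce (a ++ winv b ++ (k, s) :: b)) = p ++ (k, s) :: b.
Proof.
move=> Hgk Ha Hb Hnb NX.
set r := reduce (a ++ winv b).
have Hr : reduced r by exact: reduce_reduced.
have Hkb : reduced ((k, s) :: b) by exact: reduced_consn.
have E1 : reduce (a ++ winv b ++ (k, s) :: b) = reduce (r ++ (k, s) :: b).
  by rewrite catA reduce_catl.
have Er : reduce (r ++ b) = a.
  by rewrite reduce_catl -catA -reduce_catr reduce_winvl // cats0 reduce_id.
have J : jok r ((k, s) :: b).
  case/lastP E: r Hr Er => [|r' m] //= Hr Er.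
  rewrite jok_rcons; apply/negP => /eqP Em.
  have Em' : m = flip (k, s) by rewrite Em flipK.
  apply: NX; exists r'.
  rewrite -Er reduce_id; first by rewrite cat_rcons Em'.
  apply: reduced_cat => //.
  by rewrite Em'; apply: jok_nstart.
exists (stripw g r); rewrite E1 reduce_id; last exact: reduced_cat.
by rewrite stripw_cat //= eq_sym.
Qed.

Definition XP (z : letter) (a b : seq letter) : Prop :=
  if z.1 == i1 then exists p, a = p ++ (i2, z.2) :: b
  else if z.1 == i2 then exists p, b = p ++ (i1, z.2) :: a
  else (if z.2 then t3 a < t3 b else t3 b < t3 a)%Z.

Lemma size_cons_ (x : letter) (l : seq letter) : size (x :: l) = (size l).+1.
Proof. by []. Qed.

Lemma XP_aa z a : ~ XP z a a.
Proof.
case: z => k s; elim/I3_cases: k; rewrite /XP /=.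
- by case=> p /(congr1 size); rewrite size_cat /=; lia.
- by case=> p /(congr1 size); rewrite size_cat /=; lia.
- by case: s; lia.
Qed.

Lemma XP_disj z z' a b : XP z a b -> XP z' a b -> z = z'.
Proof.
case: z => k s; case: z' => k' s'.
have t3E : forall p l (w : seq letter), l.1 != i3 -> t3 (p ++ l :: w) = t3 w.
  by move=> *; apply: t3_cat_nx3.
elim/I3_cases: k; elim/I3_cases: k'; rewrite /XP /=;
  try (by case: s; case: s' => // ? ?; exfalso; lia);
  try (by case=> p E; case=> p' E'; move: E'; rewrite E => /(congr1 size);
          rewrite !(size_cat, size_cons_) => ?; exfalso; lia);
  try (by case=> p E; case=> p' E'; move: E'; rewrite {1}E => /cat_cons_inj [->]);
  try (by case=> p ->; rewrite t3E //; case: s'; lia);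
  try (by move=> H [p E]; move: H; rewrite E t3E //; case: s; lia).
Qed.

Definition step (z : letter) (AB : F3 * F3) : F3 * F3 :=
  let: (A, B) := AB in
  if z.1 == i1 then (stripF i1 (A * cj B (lw (i2, z.2))), B)
  else if z.1 == i2 then (A, stripF i2 (B * cj A (lw (i1, z.2))))
  else (stripF i1 (A * lw (i3, z.2)), B).

Definition st (r : seq letter) : F3 * F3 := foldr step (1, 1) r.

Lemma st_norm r : nstart i1 (fword (st r).1) /\ nstart i2 (fword (st r).2).
Proof.
elim: r => [|z r [IH1 IH2]] //=; case: (st r) IH1 IH2 => A B /= H1 H2.
case: ifP => _; [|case: ifP => _]; split => //; exact: nstart_strip.
Qed.

Lemma fword_mcj (A B : F3) l :
  fword (A * cj B (lw l)) = reduce (fword A ++ winv (fword B) ++ l :: fword B).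
Proof. by rewrite -F3mulE fword_mulF fword_cj reduce_catr. Qed.

Lemma fword_ml (A : F3) l : fword (A * lw l) = reduce (fword A ++ [:: l]).
Proof. by rewrite -F3mulE fword_mulF. Qed.

Lemma fword_strip i A : fword (stripF i A) = stripw i (fword A). Proof. by []. Qed.

Lemma hS_st s :
  [/\ hS s (x_ i3) = x_ i3, hS s (x_ i1) = cj (st (rev s)).1 (x_ i1)
    & hS s (x_ i2) = cj (st (rev s)).2 (x_ i2)].
Proof.
elim/last_ind: s => [|s z [H3 H1 H2]]; first by rewrite /= !cj1.
rewrite !hS_rcons rev_rcons /=; case: (st (rev s)) H1 H2 => A B /= H1 H2.
have Hh := hS_hom s.
case: z => k b; elim/I3_cases: k; rewrite /= !yf_x /=.
- split => //; rewrite cj_strip hom_cj // H1 (hom_lw _ Hh H2) cjM //.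
- split => //; rewrite cj_strip hom_cj // H2 (hom_lw _ Hh H1) cjM //.
- split => //; rewrite cj_strip hom_cj // H1.
  rewrite (@hom_lw _ _ 1) ?cj1 // cjM //.
Qed.

Lemma reduced_rcons s z : reduced (rcons s z) ->
  reduced s /\ (forall y, s != [::] -> last y s != flip z).
Proof.
move=> H; split; first by move: H; rewrite -cats1 => /reduced_catP [].
case: s H => [|x s] //= H y _; move: H; rewrite /reduced /= rcons_path => /andP [_].
by rewrite eq_sym flip_eq.
Qed.

Lemma XP1 a b s : XP (i1, s) a b = exists p, a = p ++ (i2, s) :: b. Proof. by []. Qed.
Lemma XP2 a b s : XP (i2, s) a b = exists p, b = p ++ (i1, s) :: a. Proof. by []. Qed.
Lemma XP3 a b s : XP (i3, s) a b = (if s then t3 a < t3 b else t3 b < t3 a)%Z. Proof. by []. Qed.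
Lemma step1 A B s : step (i1, s) (A, B) = (stripF i1 (A * cj B (lw (i2, s))), B). Proof. by []. Qed.
Lemma step2 A B s : step (i2, s) (A, B) = (A, stripF i2 (B * cj A (lw (i1, s)))). Proof. by []. Qed.
Lemma step3 A B s : step (i3, s) (A, B) = (stripF i1 (A * lw (i3, s)), B). Proof. by []. Qed.

Lemma pp_inv s : reduced s -> s != [::] ->
  XP (last (i1, false) s) (fword (st (rev s)).1) (fword (st (rev s)).2).
Proof.
elim/last_ind: s => [|s z IH] // Hr _.
have [Hs Hl] := reduced_rcons Hr.
rewrite last_rcons rev_rcons /=.
have [N1 N2] := st_norm (rev s).
have NX : ~ XP (flip z) (fword (st (rev s)).1) (fword (st (rev s)).2).
  case: (altP (s =P [::])) => [-> | ne].
    by rewrite /=; apply: XP_aa.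
  move=> X; have := XP_disj (IH Hs ne) X.
  by move/eqP; apply/negP; apply: Hl.
case: (st (rev s)) N1 N2 NX => A B N1 N2 NX.
case: z {Hr Hl} NX => k b NX.
have {}NX : ~ XP (k, ~~ b) A B := NX.
elim/I3_cases: k NX => NX.
- rewrite XP1 in NX; rewrite step1 XP1 fword_strip fword_mcj.
  apply: trans_gen => //; exact: fwordP.
- rewrite XP2 in NX; rewrite step2 XP2 fword_strip fword_mcj.
  apply: trans_gen => //; exact: fwordP.
- rewrite XP3 in NX; rewrite step3 XP3 fword_strip t3_strip // t3_red_x3; last exact: fwordP.
  by move: NX; case: b; cbn [negb sg fst snd]; lia.
Qed.

Lemma all_nstart g g' w : all (fun a : letter => a.1 == g) w -> g' != g -> nstart g' w.
Proof. by case: w => //= a w /andP [/eqP -> _]; rewrite eq_sym. Qed.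

Lemma core (W c : F3) : (forall i, hS (fword W) (x_ i) = cj c (x_ i)) -> W = 1.
Proof.
move=> H; apply: F3_eq; rewrite fword_one.
case: (altP (fword W =P [::])) => // ne; exfalso.
have X := pp_inv (fwordP W) ne.
have [H3 H1 H2] := hS_st (fword W).
have [N1 N2] := st_norm (rev (fword W)).
have Hc3 : stripF i3 c = 1.
  apply: (@cj_fix_norm _ (i3, false)); first exact: nstart_strip.
  by rewrite lw_false cj_strip -H H3.
have Hall := stripw_nil (f_equal fword Hc3).
have EA : (st (rev (fword W))).1 = c.
  apply: (@cj_inj_norm _ _ (i1, false)) => //; first exact: all_nstart Hall _.
  by rewrite lw_false -H1 H.
have EB : (st (rev (fword W))).2 = c.
  apply: (@cj_inj_norm _ _ (i2, false)) => //; first exact: all_nstart Hall _.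
  by rewrite lw_false -H2 H.
by move: X; rewrite EA EB; apply: XP_aa.
Qed.

Lemma fun_eq_hom (f g : Aut3) : hom f -> hom g -> (forall i, f (x_ i) = g (x_ i)) -> f = g.
Proof. by move=> Hf Hg E; apply: functional_extensionality; apply: hom_eq. Qed.

Lemma xi_hom i j : hom (xi i j). Proof. exact: extF_hom. Qed.

Lemma yb_PS k : PSigma3 (yb k).
Proof. by apply: gen_S; exists (src k), (dst k); split; [exact: src_dst|]. Qed.

Lemma yb_inverse k : inverse_of (yb k) (ybinv k).
Proof. by split=> t; [exact: ybK | exact: ybKV]. Qed.

Lemma hS_gen (S' : Aut3 -> Prop) : (forall k, gen S' (yb k)) -> forall s, gen S' (hS s).
Proof.
move=> Hy; elim => [|a s IH] /=; first exact: gen_id.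
apply: gen_comp IH; rewrite /Lt; case: a => k [] /=; last exact: Hy.
exact: gen_inv (Hy k) (yb_inverse k).
Qed.

Lemma hS_PS s : PSigma3 (hS s). Proof. by apply: hS_gen; exact: yb_PS. Qed.

Lemma nu_PS i : PSigma3 (nu i).
Proof.
have H : forall j, j != i -> PSigma3 (xi j i) by move=> j ji; apply: gen_S; exists j, i.
elim/I3_cases: i H => H.
- rewrite (_ : nu i1 = xi i2 i1 \o xi i3 i1); first by apply: gen_comp; apply: H.
  apply: fun_eq_hom; [exact: cj_hom | exact: hom_comp (xi_hom _ _) (xi_hom _ _) |].
  by elim/I3_cases; apply: F3_eq; vm_compute.
- rewrite (_ : nu i2 = xi i1 i2 \o xi i3 i2); first by apply: gen_comp; apply: H.
  apply: fun_eq_hom; [exact: cj_hom | exact: hom_comp (xi_hom _ _) (xi_hom _ _) |].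
  by elim/I3_cases; apply: F3_eq; vm_compute.
- rewrite (_ : nu i3 = xi i1 i3 \o xi i2 i3); first by apply: gen_comp; apply: H.
  apply: fun_eq_hom; [exact: cj_hom | exact: hom_comp (xi_hom _ _) (xi_hom _ _) |].
  by elim/I3_cases; apply: F3_eq; vm_compute.
Qed.

Lemma V3_PS f : V3 f -> PSigma3 f.
Proof.
elim => [|g [i ->]|g h _ Hg _ Hh|g h _ Hg Hi]; first exact: gen_id.
- exact: nu_PS.
- exact: gen_comp.
- exact: gen_inv Hg Hi.
Qed.

Lemma cj_PS c : PSigma3 (cj c). Proof. exact: V3_PS (cj_V3 c). Qed.

Definition hA (W : F3) : Aut3 := evalA yb ybinv W.

Lemma hA_S W : hA W = hS (fword W). Proof. by []. Qed.
Lemma hA_hom W : hom (hA W). Proof. exact: hS_hom. Qed.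
Lemma hA_mul (u v : F3) t : hA (u * v) t = hA u (hA v t). Proof. exact: (evalA_mul ybK ybKV u v t). Qed.
Lemma hA_invKV (u : F3) t : hA u (hA u^-1 t) = t. Proof. exact: (evalA_invKV ybK ybKV u t). Qed.
Lemma hA_invK (u : F3) t : hA u^-1 (hA u t) = t. Proof. exact: (evalA_invK ybK ybKV u t). Qed.

Lemma xi_decomp i j : i != j -> exists c W, xi i j = cj c \o hA W.
Proof.
have E1 : forall W, hA W = cj 1 \o hA W.
  by move=> W; apply: functional_extensionality => t /=; rewrite cj1.
elim/I3_cases: i; elim/I3_cases: j => // _.
- by exists 1, (x_ i1); rewrite -E1; apply: functional_extensionality.
- by exists 1, (x_ i3); rewrite -E1; apply: functional_extensionality.
- by exists 1, (x_ i2); rewrite -E1; apply: functional_extensionality.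
- exists (x_ i3), (x_ i3)^-1.
  apply: fun_eq_hom; [exact: xi_hom | exact: hom_comp (cj_hom _) (hA_hom _) |].
  by elim/I3_cases; apply: F3_eq; vm_compute.
- exists (x_ i1), (x_ i2)^-1.
  apply: fun_eq_hom; [exact: xi_hom | exact: hom_comp (cj_hom _) (hA_hom _) |].
  by elim/I3_cases; apply: F3_eq; vm_compute.
- exists (x_ i2), (x_ i1)^-1.
  apply: fun_eq_hom; [exact: xi_hom | exact: hom_comp (cj_hom _) (hA_hom _) |].
  by elim/I3_cases; apply: F3_eq; vm_compute.
Qed.

Lemma decomp f : PSigma3 f -> exists c W, f = cj c \o hA W.
Proof.
elim => [|g [i [j [ij ->]]]|g h _ [c1 [W1 ->]] _ [c2 [W2 ->]]|g h _ [c [W ->]] [K1 K2]].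
- by exists 1, 1; apply: functional_extensionality => t /=; rewrite cj1.
- exact: xi_decomp.
- exists (hA W1 c2 * c1), (W1 * W2); apply: functional_extensionality => t /=.
  by rewrite hom_cj; [rewrite cjM hA_mul | exact: hA_hom].
- exists (hA W^-1 c^-1), W^-1; apply: functional_extensionality => t /=.
  have E : (cj c \o hA W) (cj (hA W^-1 c^-1) (hA W^-1 t)) = t.
    rewrite /= hom_cj; last exact: hA_hom.
    by rewrite !hA_invKV cjKV.
  by rewrite -{1}E K1.
Qed.

Definition Sy : Aut3 -> Prop := fun f => exists k, f = yb k.

Lemma genS_hA h : gen Sy h -> exists W, h = hA W.
Proof.
elim => [|g [k ->]|g h' _ [W1 ->] _ [W2 ->]|g h' _ [W ->] [K1 K2]].
- by exists 1.
- by exists (x_ k); apply: functional_extensionality.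
- by exists (W1 * W2); apply: functional_extensionality => t /=; rewrite hA_mul.
- exists W^-1; apply: functional_extensionality => t.
  by rewrite -{1}(hA_invKV W t) K1.
Qed.

Lemma genS_PS h : gen Sy h -> PSigma3 h.
Proof.
elim => [|g [k ->]|g h' _ H1 _ H2|g h' _ H1 Hi]; first exact: gen_id.
- exact: yb_PS.
- exact: gen_comp.
- exact: gen_inv H1 Hi.
Qed.

Lemma hA_core W c : (forall t, hA W t = cj c t) -> W = 1.
Proof. by move=> H; apply: (@core W c) => i; rewrite -hA_S H. Qed.

Lemma part3 : exists S : Aut3 -> Prop,
      [/\ forall h, gen S h -> PSigma3 h,
          forall h, gen S h -> V3 h -> h = id
        & forall f, PSigma3 f -> exists v h, [/\ V3 v, gen S h & f = v \o h]].
Proof.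
exists Sy; split.
- exact: genS_PS.
- move=> h /genS_hA [W ->] /V3_cj [c Hc].
  have -> : W = 1 by apply: (@hA_core W c) => t; rewrite Hc.
  by apply: functional_extensionality.
- move=> f /decomp [c [W ->]]; exists (cj c), (hA W); split => //.
  + exact: cj_V3.
  + by apply: hS_gen => k; apply: gen_S; exists k.
Qed.

Lemma OPgens_yb (Q : groupType) (pi : Aut3 -> Q) k : OPgens pi k = pi (yb k).
Proof. by elim/I3_cases: k. Qed.

Section Part2.
Variables (Q : groupType) (pi : Aut3 -> Q).
Hypothesis Hpi : quotient_map_PS_V pi.

Lemma pi_mul f g : PSigma3 f -> PSigma3 g -> pi (f \o g) = (pi f * pi g)%g.
Proof. by move=> Hf Hg; case: Hpi => H _ _; apply: H. Qed.

Lemma pi_id : pi id = 1%g.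
Proof.
have := pi_mul (gen_id _) (gen_id _).
have -> : (id \o id) = (id : Aut3) by [].
by move/(congr1 (fun x => (pi id)^-1 * x)%g); rewrite mulVg mulKg => <-.
Qed.

Lemma pi_Lt a : PSigma3 (Lt yb ybinv a).
Proof. by rewrite /Lt; case: a => k [] /=; [exact: (gen_inv (yb_PS k) (yb_inverse k)) | exact: yb_PS]. Qed.

Lemma pi_ybinv k : pi (ybinv k) = (pi (yb k))^-1%g.
Proof.
have P1 := yb_PS k; have P2 := gen_inv (yb_PS k) (yb_inverse k).
apply/esym/mulg1_eq; rewrite -pi_mul //.
rewrite -pi_id; congr pi; apply: functional_extensionality => t /=; exact: ybKV.
Qed.

Lemma pi_hS s : pi (hS s) = \prod_(a <- s) (if a.2 then (OPgens pi a.1)^-1 else OPgens pi a.1)%g.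
Proof.
elim: s => [|a s IH]; first by rewrite big_nil pi_id.
rewrite big_cons -IH.
have -> : hS (a :: s) = Lt yb ybinv a \o hS s by [].
rewrite pi_mul; [congr (_ * _)%g | exact: pi_Lt | exact: hS_PS].
by rewrite /Lt OPgens_yb; case: a => k [] //=; rewrite pi_ybinv.
Qed.

Lemma evalG_hA w : evalG (OPgens pi) w = pi (hA w).
Proof. by rewrite hA_S pi_hS. Qed.

Lemma pi_hA_inv w : pi (hA w^-1) = (pi (hA w))^-1%g.
Proof.
apply/esym/mulg1_eq; rewrite -pi_mul; [|exact: hS_PS|exact: hS_PS].
rewrite -pi_id; congr pi; apply: functional_extensionality => t /=; exact: hA_invKV.
Qed.

Lemma evalG_inj : injective (evalG (OPgens pi)).
Proof.
move=> w1 w2; rewrite !evalG_hA => E.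
have H : pi (hA (w1^-1 * w2)) = 1%g.
  have -> : hA (w1^-1 * w2) = hA w1^-1 \o hA w2.
    by apply: functional_extensionality => t; rewrite /= hA_mul.
  by rewrite pi_mul ?pi_hA_inv ?E ?mulVg //; exact: hS_PS.
have HV : V3 (hA (w1^-1 * w2)).
  by case: Hpi => _ _ H3; apply/H3 => //; exact: hS_PS.
case/V3_cj: HV => c Hc.
have : w1^-1 * w2 = 1 by apply: (@hA_core _ c) => t; rewrite Hc.
by move/mulg1_eq; rewrite invgK.
Qed.

Lemma evalG_surj q : exists w, evalG (OPgens pi) w = q.
Proof.
case: Hpi => _ H2 H3; case: (H2 q) => f Hf <-.
case: (decomp Hf) => c [W E]; exists W.
rewrite evalG_hA E pi_mul; [|exact: cj_PS|exact: hS_PS].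
by rewrite (proj2 (H3 _ (cj_PS c)) (cj_V3 c)) mul1g.
Qed.

Lemma evalG_bij : bijective (evalG (OPgens pi)).
Proof.
pose g q := proj1_sig (constructive_indefinite_description _ (evalG_surj q)).
have Hg : forall q, evalG (OPgens pi) (g q) = q.
  by move=> q; rewrite /g; case: constructive_indefinite_description.
exists g => [w|q]; last exact: Hg.
by apply: evalG_inj; rewrite Hg.
Qed.

End Part2.

Definition Sym (g : Aut3) := hom g /\ forall i, exists w, g (x_ i) = cj w (x_ i).

Lemma PS_Sym g : PSigma3 g -> Sym g.
Proof.
elim => [|f [i [j [ij ->]]]|f h _ [Hf Ef] _ [Hh Eh]|f h _ [Hf Ef] [K1 K2]].
- by split; [exact: hom_id | move=> i; exists 1; rewrite cj1].
- split; first exact: xi_hom.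
  move=> l; rewrite /xi extF_x; case: ifP => [/eqP -> | _]; first by exists (x_ j).
  by exists 1; rewrite cj1.
- split; first exact: hom_comp.
  move=> i; case: (Eh i) => w E; case: (Ef i) => w' E'.
  by exists (w' * f w); rewrite /= E hom_cj // E' cjM.
- have Hh : hom h.
    by move=> u v; rewrite -{1}(K2 u) -{1}(K2 v) -Hf K1.
  split => // i; case: (Ef i) => w E.
  exists (h w)^-1.
  have := congr1 h E; rewrite K1 hom_cj // => E2.
  by rewrite {2}E2 cjK.
Qed.

Inductive Comm : F3 -> Prop :=
| Comm1 : Comm 1
| CommG u v : Comm (v * u * v^-1 * u^-1)
| CommM a b : Comm a -> Comm b -> Comm (a * b)
| CommV a : Comm a -> Comm a^-1.

Lemma Comm_conj w a : Comm a -> Comm (cj w a).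
Proof.
elim => [|u v|a1 a2 _ H1 _ H2|a1 _ H1].
- by rewrite hom1 //; [exact: Comm1 | exact: cj_hom].
- by rewrite !(cj_hom w) !(homV _ (cj_hom w)); apply: CommG.
- by rewrite cj_hom; apply: CommM.
- by rewrite (homV _ (cj_hom w)); apply: CommV.
Qed.

Lemma Comm_sym g : Sym g -> forall c, Comm (c^-1 * g c).
Proof.
case=> Hg Eg; elim/F3_ind => [|a w IH].
  by rewrite (hom1 Hg) invg1 mulg1; exact: Comm1.
have [W EW] := Eg a.1.
have Ea : g (lw a) = cj W (lw a).
  by case: a {IH} EW => i b /= EW; apply: hom_lw.
have -> : (lw a * w)^-1 * g (lw a * w) = cj w ((lw a)^-1 * g (lw a)) * (w^-1 * g w).
  by rewrite Hg invgM /cj conjgE !mulgA mulgK.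
apply: CommM IH; apply: Comm_conj.
rewrite Ea /cj conjgE.
have -> : (lw a)^-1 * (W^-1 * (lw a * W)) = (lw a)^-1 * W^-1 * (lw a)^-1^-1 * W^-1^-1.
  by rewrite !invgK !mulgA.
exact: CommG.
Qed.

Lemma Comm_cj c : Comm c -> commsub V3 (cj c).
Proof.
elim => [|u v|a b _ Ha _ Hb|a _ Ha].
- have -> : cj 1 = id by apply: functional_extensionality => t; rewrite cj1.
  exact: gen_id.
- apply: gen_S; exists (cj u), (cj v), (cj u^-1), (cj v^-1); split.
  + exact: cj_V3.
  + exact: cj_V3.
  + by split => t; [exact: cjK | exact: cjKV].
  + by split => t; [exact: cjK | exact: cjKV].
  + by apply: functional_extensionality => t /=; rewrite !cjM !mulgA.
- have -> : cj (a * b) = cj b \o cj a.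
    by apply: functional_extensionality => t /=; rewrite cjM.
  exact: gen_comp.
- apply: gen_inv Ha _.
  by split => t; [exact: cjK | exact: cjKV].
Qed.

Lemma part4 : forall g g' v v', PSigma3 g -> V3 v -> inverse_of g g' -> inverse_of v v' ->
      commsub V3 (g \o v \o g' \o v').
Proof.
move=> g g' v v' Hg /V3_cj [c ->] [G1 G2] [V1 V2].
have Ev : v' = cj c^-1.
  by apply: functional_extensionality => t; rewrite -{1}(cjKV c t) V1.
have [Hh _] := PS_Sym Hg.
have -> : g \o cj c \o g' \o v' = cj (c^-1 * g c).
  apply: functional_extensionality => t; rewrite Ev /= hom_cj // G2.
  by rewrite cjM.
apply: Comm_cj; exact: Comm_sym (PS_Sym Hg) c.
Qed.

Close Scope group_scope.

Theorem mainTheorem8 :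
  free_rank3 V3 /\
  (forall (Q : groupType) (pi : Aut3 -> Q),
      quotient_map_PS_V pi -> bijective (evalG (OPgens pi))) /\
  (exists S : Aut3 -> Prop,
      [/\ forall h, gen S h -> PSigma3 h,
          forall h, gen S h -> V3 h -> h = id
        & forall f, PSigma3 f -> exists v h, [/\ V3 v, gen S h & f = v \o h]]) /\
  (forall g g' v v', PSigma3 g -> V3 v -> inverse_of g g' -> inverse_of v v' ->
      commsub V3 (g \o v \o g' \o v')).
Proof.
split; first exact: part1.
split; first by move=> Q pi Hpi; exact: evalG_bij.
split; first exact: part3.
exact: part4.
Qed.
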